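(* Let $T\subseteq V_n$ with $|T|$ even, and let $V_n = U_1\cup U_2$ be a partition with $|T\cap U_1|$ and $|T\cap U_2|$ odd. Fix $t_1\in T\cap U_1$, $t_2\in T\cap U_2$, and set $V_i := U_i\setminus\{t_i\}$, $T_i := (T\cap U_i)\setminus\{t_i\}$ for $i=1,2$, and $F := (V_1:V_2)\cup(V_1:\{t_1,t_2\})\cup(V_2:\{t_1,t_2\})$. Then $$Q := \{x\in \operatorname{dom}(P_{T\text{-join}}(n)) : x(U_1:U_2)=1,\ x_e=0\ \forall e\in F\}$$ is a face of $\{x\in \operatorname{dom}(P_{T\text{-join}}(n)) : x(U_1:U_2)=1\}$ and equals the set of $x\in\mathbb{R}^{E_n}_+$ with $x_{\{t_1,t_2\}}=1$, $x_e=0$ for all $e\in F$, and $x(S_i:(V_i\setminus S_i))\ge 1$ for all $i\in\{1,2\}$ and all $S_i\subseteq V_i$ with $|T_i\cap S_i|$ odd. Consequently $Q$ is (up to coordinate permutation) the Cartesian product of the $T_1$-join polyhedron of the complete graph on $V_1$, the $T_2$-join polyhedron of the complete graph on $V_2$, and a single point.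
   Context: $K_n=(V_n,E_n)$ is the complete graph on $n$ nodes. For $A,B\subseteq V_n$, $A:B := \{\{a,b\} : a\in A, b\in B\}$, and $x(F')=\sum_{e\in F'}x_e$. For $T\subseteq V_n$ with $|T|$ even, a $T$-join is a set $J\subseteq E_n$ such that a node has odd degree in $(V_n,J)$ iff it lies in $T$; $P_{T\text{-join}}(n)$ is the convex hull of characteristic vectors of $T$-joins and $\operatorname{dom}(P_{T\text{-join}}(n)) = P_{T\text{-join}}(n)+\mathbb{R}^{E_n}_+ = \{x\in\mathbb{R}^{E_n}_+ : x(\delta(S))\ge 1 \text{ for all } S\subseteq V_n \text{ with } |S\cap T| \text{ odd}\}$, where $\delta(S)=S:(V_n\setminus S)$. The $T'$-join polyhedron of a complete graph on a node set $W$ with $T'\subseteq W$ is defined analogously. *)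

(* Defs.v *)
From HB Require Import structures.
From mathcomp Require Import all_boot all_order all_algebra.
Set Implicit Arguments. Unset Strict Implicit. Unset Printing Implicit Defensive.
Import Order.TTheory GRing.Theory Num.Theory.
Local Open Scope ring_scope.

(* Nodes of K_n are 'I_n; edges are the 2-element subsets of 'I_n. *)
Definition edge (n : nat) := {e : {set 'I_n} | #|e| == 2%N}.

Definition cut (n : nat) (A B : {set 'I_n}) : {set edge n} :=
  [set e : edge n | [exists a in A, exists b in B, val e == [set a; b]]].

Definition xsum (R : realFieldType) (n : nat) (x : edge n -> R) (F : {set edge n}) : R :=
  \sum_(e in F) x e.

(* dom(P_{T'-join}) of the complete graph on the node set W (subset of V_n),
   given by its defining system: x >= 0 on the edges of K_W and
   x(S:(W\S)) >= 1 for all S subset W with |S cap T'| odd.  Only coordinates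
   on edges inside W are constrained (the vector lives in R^{E(W)}).
   For W = V_n this is dom(P_{T-join}(n)). *)
Definition dom_TJ (R : realFieldType) (n : nat) (W T : {set 'I_n}) (x : edge n -> R) : Prop :=
  (forall e : edge n, val e \subset W -> 0 <= x e) /\
  (forall S : {set 'I_n}, S \subset W -> odd #|S :&: T| ->
     1 <= xsum x (cut S (W :\: S))).

Definition is_face (I : finType) (R : realFieldType) (P Q : (I -> R) -> Prop) : Prop :=
  exists (c : I -> R) (d : R),
    (forall x, P x -> \sum_i c i * x i <= d) /\
    (forall x, Q x <-> (P x /\ \sum_i c i * x i = d)).

(* Main.v *)
Require Import Defs.
From HB Require Import structures.
From mathcomp Require Import all_boot all_order all_algebra.
Import Order.TTheory GRing.Theory Num.Theory.
Set Implicit Arguments. Unset Strict Implicit.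
Local Open Scope ring_scope.

Lemma edge_pair n (e : edge n) : exists a b, a != b /\ val e = [set a; b].
Proof. by apply/cards2P; case: e. Qed.

Lemma set2_eq (T : finType) (a b c d : T) : a != b -> [set a; b] = [set c; d] ->
  (a = c /\ b = d) \/ (a = d /\ b = c).
Proof.
move=> ab E.
have : c \in [set a; b] by rewrite E !inE eqxx.
have : d \in [set a; b] by rewrite E !inE eqxx orbT.
have : a \in [set c; d] by rewrite -E !inE eqxx.
have : b \in [set c; d] by rewrite -E !inE eqxx orbT.
rewrite !inE.
move=> /orP[]/eqP-> /orP[]/eqP-> /orP[]/eqP ? /orP[]/eqP ?; subst;
  rewrite ?eqxx in ab; by auto.
Qed.

Lemma cut_pair n (A B : {set 'I_n}) (e : edge n) a b : a != b -> val e = [set a; b] ->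
  (e \in cut A B) = ((a \in A) && (b \in B)) || ((b \in A) && (a \in B)).
Proof.
move=> ab E; rewrite inE; apply/existsP/idP.
  case=> c /andP[cA] /existsP[d] /andP[dB] /eqP E'.
  by case: (@set2_eq _ a b c d ab (etrans (esym E) E')) => -[-> ->]; rewrite cA dB ?orbT.
case/orP=> /andP[aA bB].
  by exists a; rewrite aA; apply/existsP; exists b; rewrite bB E eqxx.
by exists b; rewrite aA; apply/existsP; exists a; rewrite bB E setUC eqxx.
Qed.

Lemma xsum_le (R : realFieldType) n (x : edge n -> R) (A B F : {set edge n}) :
  (forall e, 0 <= x e) -> (forall e, e \in F -> x e = 0) -> A \subset B :|: F ->
  xsum x A <= xsum x B.
Proof.
move=> x0 xF /subsetP AB; rewrite /xsum (big_mkcond (fun e => e \in A)) (big_mkcond (fun e => e \in B)).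
apply: ler_sum => e _.
case eA: (e \in A); case eB: (e \in B) => //.
by move: (AB e eA); rewrite inE eB /= => /xF ->.
Qed.
Lemma set2_eqb (T : finType) (a b c d : T) : a != b ->
  ([set a; b] == [set c; d]) = ((a == c) && (b == d) || (a == d) && (b == c)).
Proof.
move=> ab; apply/eqP/idP.
  by case/(@set2_eq _ a b c d ab) => -[-> ->]; rewrite !eqxx ?orbT.
by case/orP=> /andP[/eqP-> /eqP->] //; rewrite setUC.
Qed.

Lemma xsum1 (R : realFieldType) n (x : edge n -> R) e : xsum x [set e] = x e.
Proof. by rewrite /xsum big_set1. Qed.

Lemma card_disj (T : finType) (A B : {set T}) : A :&: B = set0 -> #|A :|: B| = (#|A| + #|B|)%N.
Proof. by move=> h; rewrite -cardsUI h cards0 addn0. Qed.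

Ltac rw_hyps := repeat match goal with
  | H : (?x == ?y) = false |- context[?x == ?y] => rewrite H
  | H : (?x \in ?A) = _ |- context[?x \in ?A] => rewrite H
  | H : is_true (?x \in ?A) |- context[?x \in ?A] => rewrite H
  end.
Ltac dv v t1 t2 := case: (v =P t1) => [->|/eqP/negbTE ?]; [| case: (v =P t2) => [->|/eqP/negbTE ?]].
Ltac fin := rw_hyps; rewrite ?eqxx /=;
  repeat (match goal with |- context[?v \in ?A] => case: (v \in A) end);
  intros; simpl in *;
  repeat match goal with H : is_true true -> _ |- _ => specialize (H erefl) end;
  try discriminate; done.

Theorem mainTheorem9 (R : realFieldType) (n : nat) (T U1 U2 : {set 'I_n}) (t1 t2 : 'I_n) :
  ~~ odd #|T| ->
  U1 :&: U2 = set0 -> U1 :|: U2 = setT ->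
  odd #|T :&: U1| -> odd #|T :&: U2| ->
  t1 \in T :&: U1 -> t2 \in T :&: U2 ->
  let V1 := U1 :\ t1 in
  let V2 := U2 :\ t2 in
  let T1 := (T :&: U1) :\ t1 in
  let T2 := (T :&: U2) :\ t2 in
  let F := cut V1 V2 :|: cut V1 [set t1; t2] :|: cut V2 [set t1; t2] in
  let P' := fun x : edge n -> R => dom_TJ setT T x /\ xsum x (cut U1 U2) = 1 in
  let Q := fun x : edge n -> R => P' x /\ (forall e, e \in F -> x e = 0) in
  is_face P' Q /\
  (forall x : edge n -> R, Q x <->
     [/\ (forall e, 0 <= x e),
         (forall e : edge n, val e = [set t1; t2] -> x e = 1),
         (forall e, e \in F -> x e = 0),
         (forall S : {set 'I_n}, S \subset V1 -> odd #|T1 :&: S| -> 1 <= xsum x (cut S (V1 :\: S)))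
       & (forall S : {set 'I_n}, S \subset V2 -> odd #|T2 :&: S| -> 1 <= xsum x (cut S (V2 :\: S)))]) /\
  (forall x : edge n -> R, Q x <->
     [/\ dom_TJ V1 T1 x, dom_TJ V2 T2 x,
         (forall e : edge n, val e = [set t1; t2] -> x e = 1)
       & (forall e, e \in F -> x e = 0)]) /\
  (forall e : edge n,
     [|| val e \subset V1, val e \subset V2, e \in F | val e == [set t1; t2]]).
Proof.
move=> Tev dis cov _ _ t1in t2in V1 V2 T1 T2 F P' Q.
have eU2 : U2 = ~: U1.
  apply/setP => v; move/setP: dis => /(_ v); move/setP: cov => /(_ v).
  by rewrite !inE; case: (v \in U1); case: (v \in U2).
subst U2.
move: t1in t2in; rewrite !inE => /andP[t1T t1U] /andP[t2T t2U].
have t2U' : (t2 \in U1) = false by apply/negbTE.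
have t12 : (t1 == t2) = false by apply/negbTE; apply/eqP => E; rewrite E t2U' in t1U.
have t21 : (t2 == t1) = false by rewrite eq_sym.
have card_e0 : #|[set t1; t2]| == 2 by rewrite cards2 t12.
pose e0 : edge n := exist (fun s : {set 'I_n} => #|s| == 2) _ card_e0.
have ve0 : forall e : edge n, val e = [set t1; t2] -> e = e0 by move=> e E; apply: val_inj.
have part4 : forall e : edge n,
     [|| val e \subset V1, val e \subset V2, e \in F | val e == [set t1; t2]].
  move=> e; case: (edge_pair e) => a [b [ab E]].
  rewrite /F !in_setU !(cut_pair _ _ ab E) E !subUset !sub1set set2_eqb //.
  rewrite /V1 /V2 !inE; move: ab.
  dv a t1 t2; dv b t1 t2; fin.
have subF1 : forall S : {set 'I_n}, S \subset V1 -> cut S (setT :\: S) \subset cut S (V1 :\: S) :|: F.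
  move=> S; move/subsetP=> hS; apply/subsetP => e; case: (edge_pair e) => a [b [ab E]].
  rewrite /F !in_setU !(cut_pair _ _ ab E) /V1 /V2 !inE.
  move: ab (hS a) (hS b); rewrite /V1 !inE.
  dv a t1 t2; dv b t1 t2; fin.
have subF2 : forall S : {set 'I_n}, S \subset V2 -> cut S (setT :\: S) \subset cut S (V2 :\: S) :|: F.
  move=> S; move/subsetP=> hS; apply/subsetP => e; case: (edge_pair e) => a [b [ab E]].
  rewrite /F !in_setU !(cut_pair _ _ ab E) /V1 /V2 !inE.
  move: ab (hS a) (hS b); rewrite /V2 !inE.
  dv a t1 t2; dv b t1 t2; fin.
have cU : cut U1 (~: U1) \subset [set e0] :|: F.
  apply/subsetP => e; case: (edge_pair e) => a [b [ab E]].
  rewrite /F !in_setU !(cut_pair _ _ ab E) in_set1 -val_eqE E /= set2_eqb // /V1 /V2 !inE.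
  move: ab; dv a t1 t2; dv b t1 t2; fin.
have e0U : e0 \in cut U1 (~: U1).
  have t12' : t1 != t2 by rewrite t12.
  rewrite (cut_pair _ _ t12' (erefl (val e0))) !inE; fin.
have e0S : forall S : {set 'I_n}, (t1 \in S) != (t2 \in S) -> e0 \in cut S (setT :\: S).
  have t12' : t1 != t2 by rewrite t12.
  move=> S; rewrite (cut_pair _ _ t12' (erefl (val e0))) !inE; fin.
have subB1 : forall S : {set 'I_n}, cut (S :&: V1) (V1 :\: (S :&: V1)) \subset cut S (setT :\: S).
  move=> S; apply/subsetP => e; case: (edge_pair e) => a [b [ab E]].
  rewrite !(cut_pair _ _ ab E) /V1 !inE; dv a t1 t2; dv b t1 t2; fin.
have subB2 : forall S : {set 'I_n}, cut (S :&: V2) (V2 :\: (S :&: V2)) \subset cut S (setT :\: S).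
  move=> S; apply/subsetP => e; case: (edge_pair e) => a [b [ab E]].
  rewrite !(cut_pair _ _ ab E) /V2 !inE; dv a t1 t2; dv b t1 t2; fin.
have T1S : forall S : {set 'I_n}, S \subset V1 -> T1 :&: S = S :&: T.
  move=> S; move/subsetP=> hS; apply/setP => v; move: (hS v); rewrite /T1 /V1 !inE.
  dv v t1 t2; fin.
have T2S : forall S : {set 'I_n}, S \subset V2 -> T2 :&: S = S :&: T.
  move=> S; move/subsetP=> hS; apply/setP => v; move: (hS v); rewrite /T2 /V2 !inE.
  dv v t1 t2; fin.
have parity : forall S : {set 'I_n}, odd #|S :&: T| -> (t1 \in S) != (t2 \in S) \/
    odd #|T1 :&: (S :&: V1)| \/ odd #|T2 :&: (S :&: V2)|.
  move=> S oS.
  have dec : S :&: T = (T1 :&: (S:&:V1)) :|: ((T2 :&: (S :&: V2)) :|: (S :&: [set t1; t2])).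
    apply/setP => v; rewrite /T1 /T2 /V1 /V2 !inE; dv v t1 t2; fin.
  have d1 : (T1 :&: (S:&:V1)) :&: ((T2 :&: (S :&: V2)) :|: (S :&: [set t1; t2])) = set0.
    apply/setP => v; rewrite /T1 /T2 /V1 /V2 !inE; dv v t1 t2; fin.
  have d2 : (T2 :&: (S :&: V2)) :&: (S :&: [set t1; t2]) = set0.
    apply/setP => v; rewrite /T1 /T2 /V1 /V2 !inE; dv v t1 t2; fin.
  move: oS; rewrite dec !card_disj //.
  case h1: (t1 \in S); case h2: (t2 \in S); try by left.
    have -> : S :&: [set t1; t2] = [set t1; t2].
      apply/setP => v; rewrite !inE; dv v t1 t2; fin.
    by rewrite cards2 t12 !oddD /=; case: (odd _); case: (odd _); auto.
  have -> : S :&: [set t1; t2] = set0.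
    apply/setP => v; rewrite !inE; dv v t1 t2; fin.
  by rewrite cards0 !oddD /=; case: (odd _); case: (odd _); auto.
have set0F : forall x : edge n -> R, forall e, e \in (set0 : {set edge n}) -> x e = 0.
  by move=> x e; rewrite inE.
have P2 : forall x : edge n -> R, Q x <->
     [/\ (forall e, 0 <= x e),
         (forall e : edge n, val e = [set t1; t2] -> x e = 1),
         (forall e, e \in F -> x e = 0),
         (forall S : {set 'I_n}, S \subset V1 -> odd #|T1 :&: S| -> 1 <= xsum x (cut S (V1 :\: S)))
       & (forall S : {set 'I_n}, S \subset V2 -> odd #|T2 :&: S| -> 1 <= xsum x (cut S (V2 :\: S)))].
  move=> x; split.
    case=> [[[x0 xcut] xU] xF].
    have x0' : forall e, 0 <= x e by move=> e; apply: x0; apply: subsetT.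
    have xe0 : x e0 = 1.
      rewrite -xU; apply/eqP; rewrite eq_le; apply/andP; split.
        by rewrite -xsum1; apply: (xsum_le x0' (set0F x)); rewrite setU0 sub1set.
      by rewrite -xsum1; apply: (xsum_le x0' xF cU).
    split => //.
    - by move=> e /ve0 ->.
    - move=> S SV oS; apply: le_trans (xcut S (subsetT S) _) _; first by rewrite -T1S.
      exact: (xsum_le x0' xF (subF1 S SV)).
    - move=> S SV oS; apply: le_trans (xcut S (subsetT S) _) _; first by rewrite -T2S.
      exact: (xsum_le x0' xF (subF2 S SV)).
  case=> x0 xe xF c1 cc2.
  have xe0 : x e0 = 1 by apply: xe.
  split => //; split.
    split; first by move=> e _; apply: x0.
    move=> S _ oS; case: (parity S oS) => [h|[h|h]].
    - rewrite -xe0 -xsum1; apply: (xsum_le x0 (set0F x)); rewrite setU0 sub1set.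
      exact: e0S.
    - apply: le_trans (c1 _ (subsetIr S V1) h) _.
      by apply: (xsum_le x0 (set0F x)); rewrite setU0.
    - apply: le_trans (cc2 _ (subsetIr S V2) h) _.
      by apply: (xsum_le x0 (set0F x)); rewrite setU0.
  apply/eqP; rewrite eq_le; apply/andP; split.
    by rewrite -xe0 -xsum1; apply: (xsum_le x0 xF cU).
  by rewrite -xe0 -xsum1; apply: (xsum_le x0 (set0F x)); rewrite setU0 sub1set.
split.
  exists (fun i => if i \in F then -1 else 0), 0.
  have sumE : forall x : edge n -> R,
      \sum_i (if i \in F then -1 else 0) * x i = - xsum x F.
    move=> x; rewrite /xsum -sumrN (big_mkcond (fun i => i \in F)) /=.
    by apply: eq_bigr => i _; case: (i \in F); rewrite ?mulN1r ?mul0r ?oppr0.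
  split.
    move=> x [[x0 _] _]; rewrite sumE oppr_le0; apply: sumr_ge0 => i _.
    by apply: x0; apply: subsetT.
  move=> x; split.
    case=> Px xF; split=> //; rewrite sumE /xsum big1 ?oppr0 //.
  case=> Px; rewrite sumE => /eqP; rewrite oppr_eq0 => /eqP H; split=> // e eF.
  apply: (psumr_eq0P _ H) => // i _; apply: Px.1.1; exact: subsetT.
split; first exact: P2.
split => //.
move=> x; split.
  move/P2 => [x0 xe xF c1 cc2]; split => //; split => //.
  - by move=> S SV oS; apply: c1 => //; rewrite setIC.
  - by move=> S SV oS; apply: cc2 => //; rewrite setIC.
case=> [[d1 c1] [d2 cc2] xe xF]; apply/P2; split => //.
- move=> e; case/or4P: (part4 e) => [h|h|h|/eqP h].
  + exact: d1.
  + exact: d2.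
  + by rewrite xF.
  + by rewrite xe.
- by move=> S SV oS; apply: c1 => //; rewrite setIC.
- by move=> S SV oS; apply: cc2 => //; rewrite setIC.
Qed.
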